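(* Let $X$ be an infinite dimensional separable Banach space and $T:X\to X$ a continuous linear operator such that $(X,T)$ is topologically transitive. If $(X,T)$ is not transitively sensitive, then there exists a dense open subset $U_0\subset X$ such that every $x\in U_0$ has a dense orbit $\{T^nx:n\in\mathbb{Z}_+\}$.
   Context: $N_T(U,V)=\{n\in\mathbb{Z}_+:U\cap T^{-n}V\neq\varnothing\}$; $(X,T)$ is topologically transitive if $N_T(U,V)\neq\varnothing$ for all nonempty open $U,V$. $S_T(W,\delta)=\{n\in\mathbb{Z}_+:\exists x_1,x_2\in W,\ \|T^nx_1-T^nx_2\|>\delta\}$. $(X,T)$ is transitively sensitive if there is $\delta>0$ with $S_T(W,\delta)\cap N_T(U,V)\neq\varnothing$ for all nonempty open $U,V,W\subset X$. *)

(* Defs.v *)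
From HB Require Import structures.
From mathcomp Require Import all_boot all_order all_algebra.
From mathcomp Require Import all_classical all_reals all_analysis.
Set Implicit Arguments. Unset Strict Implicit. Unset Printing Implicit Defensive.
Import Order.TTheory GRing.Theory Num.Theory.
Import numFieldNormedType.Exports.
Local Open Scope classical_set_scope.
Local Open Scope ring_scope.

Definition separable (T : topologicalType) : Prop :=
  exists D : set T, countable D /\ dense D.

Definition infinite_dimensional (R : realType) (X : normedModType R) : Prop :=
  forall n : nat, exists v : 'I_n -> X,
    forall c : 'I_n -> R, \sum_(i < n) c i *: v i = 0 -> forall i, c i = 0.

Definition N_T (X : Type) (T : X -> X) (U V : set X) : set nat :=
  [set n | U `&` (iter n T) @^-1` V !=set0].

Definition topologically_transitive (X : topologicalType) (T : X -> X) : Prop :=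
  forall U V : set X, open U -> open V -> U !=set0 -> V !=set0 ->
    N_T T U V !=set0.

Definition S_T (R : realType) (X : normedModType R) (T : X -> X)
    (W : set X) (delta : R) : set nat :=
  [set n | exists x1 x2, W x1 /\ W x2 /\ delta < `|iter n T x1 - iter n T x2|].

Definition transitively_sensitive (R : realType) (X : normedModType R)
    (T : X -> X) : Prop :=
  exists delta : R, 0 < delta /\
    forall U V W : set X, open U -> open V -> open W ->
      U !=set0 -> V !=set0 -> W !=set0 ->
      S_T T W delta `&` N_T T U V !=set0.

Definition T_orbit (X : Type) (T : X -> X) (x : X) : set X :=
  range (fun n : nat => iter n T x).

(* Main.v *)
Require Import Defs.
From HB Require Import structures.
From mathcomp Require Import all_boot all_order all_algebra.
From mathcomp Require Import all_classical all_reals all_analysis.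
Import Order.TTheory GRing.Theory Num.Theory.
Import numFieldNormedType.Exports.
Local Open Scope classical_set_scope.
Local Open Scope ring_scope.

Lemma iterB (R : realType) (X : normedModType R) (T : {linear X -> X}) n a b :
  iter n T (a - b) = iter n T a - iter n T b.
Proof. by elim: n => //= n ->; rewrite raddfB. Qed.

Lemma iterZ (R : realType) (X : normedModType R) (T : {linear X -> X}) n (t : R) a :
  iter n T (t *: a) = t *: iter n T a.
Proof. by elim: n => //= n ->; rewrite linearZ. Qed.

Lemma iter_cont (X : topologicalType) (T : X -> X) n :
  continuous T -> continuous (iter n T).
Proof.
move=> cT; elim: n => [|n IH] /=; first by move=> x.
move=> x; apply: continuous_comp; [exact: IH|exact: cT].
Qed.

Lemma ballN (R : realType) (X : normedModType R) (x y : X) e :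
  ball x e y <-> `|x - y| < e.
Proof. by rewrite -ball_normE. Qed.

Lemma open_ball_sub (R : realType) (X : normedModType R) (A : set X) x :
  open A -> A x -> exists2 e : R, 0 < e & forall y, `|x - y| < e -> A y.
Proof.
move=> oA Ax.
have /nbhs_ballP[e e0 sub] : nbhs x A by apply: open_nbhs_nbhs; split.
by exists e => // y /ballN /sub.
Qed.

Theorem proposition7p4 (R : realType) (X : completeNormedModType R)
    (T : {linear X -> X}) :
  infinite_dimensional X ->
  separable X ->
  continuous T ->
  topologically_transitive T ->
  ~ transitively_sensitive T ->
  exists U0 : set X, open U0 /\ dense U0 /\
    forall x, U0 x -> dense (T_orbit (T : X -> X) x).
Proof.
move=> _ _ cT tT nTS.
have [U [V [W [oU [oV [oW [[u Uu] [[v Vv] [[w Ww] H]]]]]]]]] :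
  exists U V W : set X, open U /\ open V /\ open W /\ U !=set0 /\ V !=set0 /\
    W !=set0 /\ forall n, N_T (T : X -> X) U V n -> forall x1 x2, W x1 -> W x2 ->
      `|iter n T x1 - iter n T x2| <= 1.
  apply: contrapT => Hn; apply: nTS; exists 1; split => // U V W oU oV oW U0 V0 W0.
  apply: contrapT => Hne; apply: Hn; exists U, V, W; do 6! split => //.
  move=> n Nn x1 x2 Wx1 Wx2; rewrite leNgt; apply/negP => lt; apply: Hne.
  by exists n; split => //; exists x1, x2.
have [e e0 subW] := @open_ball_sub _ _ _ _ oW Ww.
have key : forall n, N_T (T : X -> X) U V n -> forall (t : R) k, 0 < t ->
    `|k| < e * t -> `|iter n T k| <= t.
  move=> n Nn t k t0 kt.
  have tn0 : t != 0 by rewrite gt_eqF.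
  set h := t^-1 *: k.
  have hk : k = t *: h by rewrite /h scalerA divff // scale1r.
  have hn : `|h| < e.
    rewrite /h normrZ ger0_norm ?invr_ge0 ?ltW // mulrC ltr_pdivrMr //.
  have Wh : W (w + h) by apply: subW; rewrite opprD addrA subrr sub0r normrN.
  have Ww' : W w by apply: subW; rewrite subrr normr0.
  have := H n Nn (w + h) w Wh Ww'.
  rewrite -iterB (addrC w) addrK => Hh.
  rewrite hk iterZ normrZ (ger0_norm (ltW t0)).
  by rewrite -[X in _ <= X]mulr1 ler_wpM2l // ltW.
have icont : forall k, continuous (iter k (T : X -> X)).
  by move=> k; apply: iter_cont.
have orbU : forall x, U x -> dense (T_orbit (T : X -> X) x).
  move=> x Ux G G0 oG.
  have [c [q [Vq Gq]]] := tT V G oV oG (ex_intro _ v Vv) G0.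
  have oA : open (V `&` (iter c (T : X -> X)) @^-1` G).
    apply: openI => //; apply: open_comp => // z _; exact: icont.
  have [s s0 subA] := @open_ball_sub _ _ _ _ oA (conj Vq Gq).
  have s20 : 0 < s / 2 by rewrite divr_gt0.
  have es0 : 0 < e * (s / 2) by rewrite mulr_gt0.
  have oU' : open (U `&` ball x (e * (s / 2))) by apply: openI => //; apply: ball_open.
  have [n [y [[Uy bxy] bqy]]] := tT _ _ oU' (ball_open q (s / 2))
    (ex_intro _ x (conj Ux (ballxx x es0))) (ex_intro _ q (ballxx q s20)).
  move/ballN : bxy => bxy; move/ballN : bqy => bqy.
  have s2s : s / 2 < s by rewrite ltr_pdivrMr // ltr_pMr // ltr1n.
  have Nn : N_T (T : X -> X) U V n.
    exists y; split => //; apply: (subA _ _).1; exact: lt_trans bqy s2s.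
  have Hb := key n Nn (s / 2) (x - y) s20 bxy.
  have Hq : `|q - iter n T x| < s.
    apply: (le_lt_trans (ler_distD (iter n T y) _ _)).
    rewrite (distrC (iter n T y)) -iterB.
    by rewrite [s]splitr; apply: ltr_leD.
  exists (iter c T (iter n T x)); split; first exact: (subA _ Hq).2.
  by exists (c + n)%N => //; rewrite iterD.
exists (\bigcup_(k in setT) (iter k (T : X -> X)) @^-1` U); split.
  apply: bigcup_open => k _; apply: open_comp => // z _; exact: icont.
split.
  move=> G G0 oG.
  have [k [x [Gx Ux]]] := tT G U oG oU G0 (ex_intro _ u Uu).
  by exists x; split => //; exists k.
move=> x [k _ Ux] G G0 oG.
have [y [Gy [m _ Ey]]] := orbU _ Ux G G0 oG.
subst y.
by exists (iter m T (iter k T x)); split => //; exists (m + k)%N => //; rewrite iterD.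
Qed.
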